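(* For every $\delta\in\mathcal{D}^{LSL}$, Spearman's rho of the lower semilinear copula $S_\delta$ is $$\rho(S_\delta)=12\int_{[0,1]}\delta(x)\,x\,d\lambda(x)-3.$$
   Context: $\lambda$ is Lebesgue measure on $[0,1]$, $\lambda_2$ on $[0,1]^2$. Let $\mathcal{D}$ be the set of all functions $\delta:[0,1]\to[0,1]$ with $\delta(u)\le u$, $\delta(1)=1$, $\delta$ non-decreasing and 2-Lipschitz. Let $\mathcal{D}^{LSL}$ be the set of $\delta\in\mathcal{D}$ such that $x\mapsto\delta(x)/x$ is non-decreasing and $x\mapsto\delta(x)/x^2$ is non-increasing on $(0,1]$. For $\delta\in\mathcal{D}^{LSL}$, $S_\delta(x,y)=y\,\delta(x)/x$ if $y\le x$ and $x\,\delta(y)/y$ otherwise (convention $0/0:=0$); it is a copula. For a copula $C$, Spearman's rho is $\rho(C)=12\int_{[0,1]^2}C\,d\lambda_2-3$. *)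

(* Defs.v *)
From HB Require Import structures.
From mathcomp Require Import all_boot all_order all_algebra.
From mathcomp Require Import all_classical all_reals all_analysis.
Set Implicit Arguments. Unset Strict Implicit. Unset Printing Implicit Defensive.
Import Order.TTheory GRing.Theory Num.Theory.
Local Open Scope classical_set_scope.
Local Open Scope ring_scope.

Section Defs.
Variable R : realType.

(* The class D: delta : [0,1] -> [0,1] (represented as R -> R, only values on
   [0,1] matter), delta(u) <= u, delta(1) = 1, non-decreasing, 2-Lipschitz. *)
Definition in_D (delta : R -> R) : Prop :=
  (forall u, 0 <= u <= 1 -> 0 <= delta u <= 1) /\
  (forall u, 0 <= u <= 1 -> delta u <= u) /\
  delta 1 = 1 /\
  (forall u v, 0 <= u <= 1 -> 0 <= v <= 1 -> u <= v -> delta u <= delta v) /\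
  (forall u v, 0 <= u <= 1 -> 0 <= v <= 1 -> `|delta u - delta v| <= 2 * `|u - v|).

Definition in_DLSL (delta : R -> R) : Prop :=
  in_D delta /\
  (forall x y, 0 < x -> x <= y -> y <= 1 -> delta x / x <= delta y / y) /\
  (forall x y, 0 < x -> x <= y -> y <= 1 -> delta y / y ^+ 2 <= delta x / x ^+ 2).

(* Lower semilinear copula; MathComp division satisfies 0/0 = 0. *)
Definition S_delta (delta : R -> R) (x y : R) : R :=
  if y <= x then y * delta x / x else x * delta y / y.

Definition spearman_rho (C : R -> R -> R) : \bar R :=
  (12%:E * \int[(@lebesgue_measure R) \x (@lebesgue_measure R)]_(z in `[0%R, 1%R] `*` `[0%R, 1%R])
      (C z.1 z.2)%:E - 3%:E)%E.

End Defs.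

(* Main.v *)
Require Import Defs.
From mathcomp Require Import all_boot all_order all_algebra.
From mathcomp Require Import all_classical all_reals all_analysis.
From mathcomp Require Import ring lra measurable_realfun.
Import Order.TTheory GRing.Theory Num.Theory.
Import numFieldTopology.Exports.
Local Open Scope classical_set_scope.
Local Open Scope ring_scope.

Section S6.
Variable R : realType.
Local Notation mu := (@lebesgue_measure R).
Variable delta : R -> R.
Hypothesis d01 : forall u, 0 <= u <= 1 -> 0 <= delta u <= 1.
Hypothesis dLSL : forall x y, 0 < x -> x <= y -> y <= 1 -> delta x / x <= delta y / y.

Let g t := delta t / t.
Let c (t : R) := Num.min (Num.max t 0) 1.
Let h t := g (c t).

Lemma c01 t : 0 <= c t <= 1.
Proof. rewrite /c; case: (leP t 0) => ?; rewrite ?max_r ?max_l //; case: (leP t 1) => ?; rewrite ?min_l ?min_r //=; lra. Qed.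

Lemma c_id t : 0 <= t <= 1 -> c t = t.
Proof. move=> /andP[t0 t1]; by rewrite /c max_l // min_l. Qed.

Lemma c_nd : {homo c : x y / x <= y}.
Proof. move=> x y xy; rewrite /c; apply: le_min2 => //; exact: le_max2. Qed.

Lemma g_ge0 t : 0 <= t <= 1 -> 0 <= g t.
Proof. move=> t01; have /andP[d0 _] := d01 _ t01; case/andP: t01 => t0 _; exact: divr_ge0. Qed.

Lemma g_nd x y : 0 <= x -> x <= y -> y <= 1 -> g x <= g y.
Proof.
rewrite le_eqVlt => /orP[/eqP<-|x0] xy y1.
  by rewrite /g invr0 mulr0; apply: g_ge0; apply/andP; split => //; lra.
exact: dLSL x y x0 xy y1.
Qed.

Lemma h_nd : {homo h : x y / x <= y}.
Proof.
move=> x y xy; rewrite /h; have /andP[? ?] := c01 x; have /andP[? ?] := c01 y.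
apply: g_nd => //; exact: c_nd.
Qed.

Lemma h_ge0 t : 0 <= h t.
Proof. exact/g_ge0/c01. Qed.

Lemma h_id t : 0 <= t <= 1 -> h t = g t.
Proof. by move=> /c_id; rewrite /h => ->. Qed.

Lemma mh : measurable_fun setT h.
Proof. apply: nondecreasing_measurable => //; exact: h_nd. Qed.


Let fa (z : R * R) : R :=
  if (0 <= z.1) && (z.1 <= 1) && (0 <= z.2) && (z.2 <= z.1) then z.2 * h z.1 else 0.
Let fb (z : R * R) : R :=
  if (0 <= z.2) && (z.2 <= 1) && (0 <= z.1) && (z.1 < z.2) then z.1 * h z.2 else 0.

Lemma fa_ge0 z : 0 <= fa z.
Proof.
rewrite /fa; case: ifPn => // /andP[/andP[/andP[_ _] ?] _].
by apply: mulr_ge0 => //; exact: h_ge0.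
Qed.

Lemma fb_ge0 z : 0 <= fb z.
Proof.
rewrite /fb; case: ifPn => // /andP[/andP[/andP[_ _] ?] _].
by apply: mulr_ge0 => //; exact: h_ge0.
Qed.

Lemma mfa : measurable_fun [set: R * R] fa.
Proof.
have m1 := @measurable_fst _ _ R R.
have m2 := @measurable_snd _ _ R R.
apply: measurable_fun_ifT.
- repeat apply: measurable_and;
    by apply: measurable_fun_ler => //; exact: measurable_cst.
- apply: measurable_funM => //; exact: measurableT_comp mh m1.
- exact: measurable_cst.
Qed.

Lemma mfb : measurable_fun [set: R * R] fb.
Proof.
have m1 := @measurable_fst _ _ R R.
have m2 := @measurable_snd _ _ R R.
apply: measurable_fun_ifT.
- repeat apply: measurable_and;
    by [apply: measurable_fun_ler => //; exact: measurable_cst |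
        apply: measurable_fun_ltr => //].
- apply: measurable_funM => //; exact: measurableT_comp mh m2.
- exact: measurable_cst.
Qed.


Lemma int_id (x : R) : 0 <= x ->
  (\int[mu]_(y in `[0%R, x]) (y%:E) = (x ^+ 2 / 2)%:E)%E.
Proof.
rewrite le_eqVlt => /orP[/eqP<-|x0].
  by rewrite set_itv1 integral_set1 expr0n /= mul0r.
have dF (y : R) : derivable (fun y : R => y ^+ 2 / 2) y 1.
  by apply: derivableM; [exact: exprn_derivable|exact: derivable_cst].
rewrite (@continuous_FTC2 _ (fun y : R => y) (fun y : R => y ^+ 2 / 2)) //.
- by rewrite expr0n /= mul0r sube0.
- by apply: continuous_in_subspaceT => y _; exact: cvg_id.
- split.
  + by move=> y _; exact: dF.
  + apply: cvg_at_right_filter; apply: cvgM; last exact: cvg_cst.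
    exact: exprn_continuous.
  + apply: cvg_at_left_filter; apply: cvgM; last exact: cvg_cst.
    exact: exprn_continuous.
- move=> y _; rewrite derive1Mr//.
  by rewrite derive1E exp_derive /= expr1 -scalerA scaler1 -mulr_natl mulrC mulKf.
Qed.

Lemma int_idZ (x k : R) : 0 <= x -> 0 <= k ->
  (\int[mu]_(y in `[0%R, x]) ((y * k)%:E) = (k * (x ^+ 2 / 2))%:E)%E.
Proof.
move=> x0 k0.
under eq_integral do rewrite EFinM.
rewrite ge0_integralZr//.
- by rewrite int_id// -EFinM mulrC.
- by move=> y; rewrite /= in_itv /= => /andP[y0 _]; rewrite lee_fin.
Qed.

Lemma Fa x : (\int[mu]_y (fa (x, y))%:E =
   (if (0 <= x) && (x <= 1) then h x * (x ^+ 2 / 2) else 0)%:E)%E.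
Proof.
case: ifPn => [/andP[x0 x1]|nx].
  rewrite -int_idZ//; last exact: h_ge0.
  rewrite [RHS]integral_mkcond; apply: eq_integral => y _.
  rewrite /fa /patch /= x0 x1 /= mem_setE in_itv /=.
  by case: ifPn.
rewrite integral0_eq// => y _; rewrite /fa /=.
by rewrite (negbTE nx).
Qed.


Lemma Fb y : (\int[mu]_x (fb (x, y))%:E =
   (if (0 <= y) && (y <= 1) then h y * (y ^+ 2 / 2) else 0)%:E)%E.
Proof.
case: ifPn => [/andP[y0 y1]|ny].
  rewrite -int_idZ//; last exact: h_ge0.
  rewrite -integral_itv_bndo_bndc; last first.
    apply/measurable_EFinP; apply: measurable_funM => //; exact: measurable_cst.
  rewrite [RHS]integral_mkcond; apply: eq_integral => x _.
  rewrite /fb /patch /= y0 y1 /= mem_setE in_itv /=.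
  by case: ifPn.
rewrite integral0_eq// => x _; rewrite /fb /=.
by rewrite (negbTE ny).
Qed.


Lemma Spt z : ((fun z : R * R => (S_delta delta z.1 z.2)%:E) \_ (`[0%R, 1%R] `*` `[0%R, 1%R])) z
  = ((fa z)%:E + (fb z)%:E)%E.
Proof.
case: z => x y; rewrite /patch /S_delta /fa /fb /=.
case: ifPn => [/set_mem [/=]|].
  rewrite !in_itv /= => /andP[x0 x1] /andP[y0 y1].
  rewrite x0 x1 y0 y1 /=.
  case: leP => yx.
    by rewrite adde0 h_id ?x0 ?x1 // /g mulrA.
  by rewrite add0e h_id ?y0 ?y1 // /g mulrA.
move=> H.
have Hf u v : 0 <= u <= 1 -> 0 <= v <= 1 -> (u, v) \in `[0%R, 1%R] `*` `[0%R, 1%R].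
  by move=> u01 v01; apply/mem_set; split => /=; rewrite in_itv /=.
case: ifPn => [/andP[/andP[/andP[x0 x1] y0] yx]|_].
  by case/negP: H; apply: Hf; apply/andP; split => //; lra.
case: ifPn => [/andP[/andP[/andP[y0 y1] x0] xy]|_].
  by case/negP: H; apply: Hf; apply/andP; split => //; lra.
by rewrite adde0.
Qed.

Lemma mfaT : measurable_fun (T := (measurableTypeR R * measurableTypeR R)%type)
  [set: _] (fun z => (fa z)%:E).
Proof. apply/measurable_EFinP; exact: mfa. Qed.
Lemma mfbT : measurable_fun (T := (measurableTypeR R * measurableTypeR R)%type)
  [set: _] (fun z => (fb z)%:E).
Proof. apply/measurable_EFinP; exact: mfb. Qed.

Lemma main_int :
  (\int[mu \x mu]_(z in `[0%R, 1%R] `*` `[0%R, 1%R]) (S_delta delta z.1 z.2)%:E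
   = \int[mu]_(x in `[0%R, 1%R]) (delta x * x)%:E)%E.
Proof.
rewrite integral_mkcond.
under eq_integral do rewrite Spt.
rewrite ge0_integralD //; try (by move=> z _; rewrite lee_fin; exact: fa_ge0);
  try (by move=> z _; rewrite lee_fin; exact: fb_ge0);
  try exact: mfaT; try exact: mfbT.
rewrite (fubini_tonelli1 (fun z : measurableTypeR R * measurableTypeR R => (fa z)%:E)); last 2 first.
- exact: mfaT.
- by move=> z; rewrite lee_fin; exact: fa_ge0.
rewrite (fubini_tonelli2 (fun z : measurableTypeR R * measurableTypeR R => (fb z)%:E)); last 2 first.
- exact: mfbT.
- by move=> z; rewrite lee_fin; exact: fb_ge0.
rewrite /fubini_F /fubini_G.
under eq_integral do rewrite Fa.
under [X in (_ + X)%E]eq_integral do rewrite Fb.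
have E : (\int[mu]_x (if (0 <= x) && (x <= 1) then h x * (x ^+ 2 / 2) else 0)%:E
    = \int[mu]_(x in `[0%R, 1%R]) (h x * (x ^+ 2 / 2))%:E)%E.
  rewrite [RHS]integral_mkcond; apply: eq_integral => x _.
  by rewrite /patch mem_setE in_itv /=; case: ifPn.
have mH : measurable_fun (T:=measurableTypeR R) `[0%R, 1%R] (fun x : R => (h x * (x ^+ 2 / 2))%:E).
  apply/measurable_EFinP; apply: measurable_funM.
    exact: measurable_funS mh.
  apply: measurable_funM; last exact: measurable_cst.
  exact: measurable_funX.
have H0 : forall x : R, (`[0%R, 1%R]%classic : set R) x -> (0 <= (h x * (x ^+ 2 / 2))%:E)%E.
  move=> x; rewrite /= in_itv /= => /andP[x0 _]; rewrite lee_fin.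
  by apply: mulr_ge0; [exact: h_ge0| apply: mulr_ge0 => //; exact: exprn_ge0].
rewrite E -ge0_integralD //.
apply: eq_integral => x; rewrite inE /= in_itv /= => x01.
rewrite -EFinD h_id // /g; congr EFin.
have [->|x0] := eqVneq x 0; first by rewrite !(expr0n, mul0r, mulr0, addr0).
by field.
Qed.
End S6.

Theorem mainTheorem6 (R : realType) (delta : R -> R) :
  in_DLSL delta ->
  spearman_rho (S_delta delta) =
  (12%:E * \int[@lebesgue_measure R]_(x in `[0%R, 1%R]) (delta x * x)%:E - 3%:E)%E.
Proof.
move=> [[d01 _] [dLSL _]].
by rewrite /spearman_rho (@main_int R delta d01 dLSL).
Qed.
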